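(* Let $\Gamma$ be a $C^2$ curve with arc-length parametrization $\boldsymbol X(s)$ satisfying $\boldsymbol X(0)=\boldsymbol 0$ and $\partial_s\boldsymbol X(0)=(1,0)^T$, with unit normal field $\boldsymbol n$, and fix $\lambda\ge0$. For $R>0$ let $\mathcal O$ be the disc of radius $R$ centered at $\boldsymbol 0$ and choose collocation points $\boldsymbol q^{(1)}_k=\boldsymbol X(\eta^{(1)}_kR)$, $k=1,2,3$, with $\eta^{(1)}_k$ distinct; $\boldsymbol q^{(2)}_k=\boldsymbol X(\eta^{(2)}_kR)$, $k=1,2$, with $\eta^{(2)}_1\neq\eta^{(2)}_2$; $\boldsymbol q^{(3)}=\boldsymbol X(\eta^{(3)}R)$; and $\boldsymbol q^{(4)}_k=R\boldsymbol\xi_k$, $k=1,2,3$, with $\boldsymbol\xi_1,\boldsymbol\xi_2,\boldsymbol\xi_3$ non-collinear, where all constants $\eta^{(d)}_k,\boldsymbol\xi_k$ are independent of $R$ and all points lie in $\mathcal O$. Then there exists $R_0>0$ such that for all $R\le R_0$ the $15\times15$ collocation matrix $\boldsymbol M=\boldsymbol M(R)$ defined in the context is invertible and $\|\boldsymbol M^{-1}\|_\infty$ is bounded uniformly in $R\in(0,R_0]$.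
   Context: Let $\phi_1=1,\phi_2=x,\phi_3=y,\phi_4=x^2,\phi_5=y^2,\phi_6=xy$. Unknowns are $\boldsymbol c_1,\dots,\boldsymbol c_6\in\mathbb R^2$ (components $c_j^{(1)},c_j^{(2)}$) and $d_1,d_2,d_3\in\mathbb R$, i.e. a vector in $\mathbb R^{15}$, representing $\hat{\boldsymbol v}(\boldsymbol x)=\sum_{j=1}^6\boldsymbol c_j\phi_j(\boldsymbol x/R)$, $\hat q(\boldsymbol x)=\sum_{j=1}^3\frac{d_j}{R}\phi_j(\boldsymbol x/R)$. The matrix $\boldsymbol M$ is the matrix of the linear map sending the unknowns to the 15 quantities: (i) for $k=1,2,3$: $\sum_{j=1}^6\phi_j(\boldsymbol q^{(1)}_k/R)\boldsymbol c_j\in\mathbb R^2$; (ii) for $k=1,2$: $\sum_{j=1}^6\big(\boldsymbol c_j\nabla\phi_j^T+\nabla\phi_j\boldsymbol c_j^T\big)(\boldsymbol q^{(2)}_k/R)\,\boldsymbol n(\boldsymbol q^{(2)}_k)-\sum_{j=1}^3d_j\phi_j(\boldsymbol q^{(2)}_k/R)\boldsymbol n(\boldsymbol q^{(2)}_k)\in\mathbb R^2$; (iii) $\sum_{j=1}^6\big((\Delta-\lambda)\phi_j\big)(\boldsymbol q^{(3)}/R)\,\boldsymbol c_j-\sum_{j=1}^3\nabla\phi_j(\boldsymbol q^{(3)}/R)\,d_j\in\mathbb R^2$; (iv) for $k=1,2,3$: $\sum_{j=1}^6\big(\partial_x\phi_j\,c_j^{(1)}+\partial_y\phi_j\,c_j^{(2)}\big)(\boldsymbol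 q^{(4)}_k/R)\in\mathbb R$ (with a fixed ordering of rows and columns). $\|\cdot\|_\infty$ is the maximum-row-sum matrix norm. These encode collocation of the Dirichlet condition, traction condition, Brinkman momentum equation and divergence-free condition for a local Cauchy problem on $\Gamma\cap\mathcal O$. *)

(* Defs.v *)
From mathcomp Require Import all_boot all_order all_algebra.
From mathcomp Require Import all_classical all_reals all_analysis.
Import Order.TTheory GRing.Theory Num.Theory.
Import numFieldNormedType.Exports.
Local Open Scope ring_scope.

Section CollocDefs.
Variable R : realType.

(* phi j, j = 0..5, stands for phi_{j+1} in the paper:
   1, x, y, x^2, y^2, xy *)
Definition phi (j : nat) (x y : R) : R :=
  match j with
  | 0 => 1 | 1 => x | 2 => y | 3 => x ^+ 2 | 4 => y ^+ 2 | _ => x * y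
  end.

Definition dphi (a j : nat) (x y : R) : R :=
  match j with
  | 0 => 0
  | 1 => if a == 0%N then 1 else 0
  | 2 => if a == 0%N then 0 else 1
  | 3 => if a == 0%N then 2 * x else 0
  | 4 => if a == 0%N then 0 else 2 * y
  | _ => if a == 0%N then y else x
  end.

Definition lapphi (j : nat) : R :=
  match j with 3 | 4 => 2 | _ => 0 end.

Definition comp (a : nat) (p : R * R) : R := if a == 0%N then p.1 else p.2.

(* Columns u = 0..11 : c_{j+1}^{(b+1)} with j = u/2, b = u mod 2;
   columns u = 12..14 : d_{u-11}.
   Rows r = 0..5   : (i)   Dirichlet at q1_(r/2), component r mod 2;
   rows r = 6..9   : (ii)  traction at q2_((r-6)/2), component r mod 2;
   rows r = 10..11 : (iii) Brinkman momentum at q3, component r-10;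
   rows r = 12..14 : (iv)  divergence at q4_(r-12).
   nv k is the unit normal n(q2_k); Rad is the radius R. *)
Definition collocM (lam Rad : R) (q1 : 'I_3 -> R * R) (q2 nv : 'I_2 -> R * R)
    (q3 : R * R) (q4 : 'I_3 -> R * R) : 'M[R]_15 :=
  \matrix_(r < 15, u < 15)
   (let sc (p : R * R) := (p.1 / Rad, p.2 / Rad) in
    if (u < 12)%N then
      let j := (u %/ 2)%N in let b := (u %% 2)%N in
      if (r < 6)%N then
        let p := sc (q1 (inord (r %/ 2))) in let a := (r %% 2)%N in
        (a == b)%:R * phi j p.1 p.2
      else if (r < 10)%N then
        let k : 'I_2 := inord ((r - 6) %/ 2) in
        let p := sc (q2 k) in let n := nv k in let a := (r %% 2)%N in
        (a == b)%:R * (dphi 0 j p.1 p.2 * n.1 + dphi 1 j p.1 p.2 * n.2)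
        + dphi a j p.1 p.2 * comp b n
      else if (r < 12)%N then
        let p := sc q3 in let a := (r - 10)%N in
        (a == b)%:R * (lapphi j - lam * phi j p.1 p.2)
      else
        let p := sc (q4 (inord (r - 12))) in dphi b j p.1 p.2
    else
      let j := (u - 12)%N in
      if (r < 6)%N then 0
      else if (r < 10)%N then
        let k : 'I_2 := inord ((r - 6) %/ 2) in
        let p := sc (q2 k) in let n := nv k in let a := (r %% 2)%N in
        - (phi j p.1 p.2 * comp a n)
      else if (r < 12)%N then
        let p := sc q3 in let a := (r - 10)%N in
        - dphi a j p.1 p.2
      else 0).

Definition mxinfnorm (m n : nat) (A : 'M[R]_(m, n)) : R :=
  \big[Num.max/0]_(i < m) \sum_(j < n) `|A i j|.

End CollocDefs.

Arguments collocM {R}.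
Arguments mxinfnorm {R m n}.

(* Main.v *)
Require Import Defs.
From mathcomp Require Import all_boot all_order all_algebra.
From mathcomp Require Import all_classical all_reals all_analysis.
From mathcomp Require Import ring.
Import Order.TTheory GRing.Theory Num.Theory.
Import numFieldNormedType.Exports.
Local Open Scope classical_set_scope.
Local Open Scope ring_scope.

Section A.
Variable R : realType.

Lemma cvg_sumR {T : Type} (F : set_system T) {FF : Filter F} (I : Type) (r : seq I) (P : pred I) (f : I -> T -> R) (l : I -> R) :
  (forall i, P i -> f i x @[x --> F] --> l i) ->
  \sum_(i <- r | P i) f i x @[x --> F] --> \sum_(i <- r | P i) l i.
Proof. move=> H; apply: cvg_big => //; exact: add_continuous. Qed.

Lemma cvg_prodR {T : Type} (F : set_system T) {FF : Filter F} (I : Type) (r : seq I) (P : pred I) (f : I -> T -> R) (l : I -> R) :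
  (forall i, P i -> f i x @[x --> F] --> l i) ->
  \prod_(i <- r | P i) f i x @[x --> F] --> \prod_(i <- r | P i) l i.
Proof. move=> H; apply: cvg_big => //; exact: mul_continuous. Qed.

Lemma cvg_det {T : Type} (F : set_system T) {FF : Filter F} n (G : T -> 'M[R]_n) (L : 'M[R]_n) :
  (forall i j, G x i j @[x --> F] --> L i j) ->
  \det (G x) @[x --> F] --> \det L.
Proof.
move=> H; rewrite /determinant.
apply: cvg_sumR => s _.
apply: cvgMl_tmp; apply: cvg_prodR => i _; exact: H.
Qed.

Lemma cvg_adj {T : Type} (F : set_system T) {FF : Filter F} n (G : T -> 'M[R]_n) (L : 'M[R]_n) :
  (forall i j, G x i j @[x --> F] --> L i j) ->
  forall i j, \adj (G x) i j @[x --> F] --> \adj L i j.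
Proof.
move=> H i j; rewrite [X in _ --> X]mxE /cofactor.
under eq_cvg do rewrite mxE /cofactor.
apply: cvgMl_tmp; apply: cvg_det => k l; rewrite !mxE.
under eq_cvg do rewrite !mxE.
exact: H.
Qed.

Lemma infnorm_le n (A : 'M[R]_n) : mxinfnorm A <= \sum_i \sum_j `|A i j|.
Proof.
rewrite /mxinfnorm; apply: bigmax_le.
  by apply: sumr_ge0 => i _; apply: sumr_ge0.
move=> i _; rewrite [X in _ <= X](bigD1 i) //= lerDl.
by apply: sumr_ge0 => k _; apply: sumr_ge0.
Qed.

Lemma key n (G : R -> 'M[R]_n) (L : 'M[R]_n) :
  (forall i j, G x i j @[x --> 0^'] --> L i j) -> L \in unitmx ->
  exists R0 : R, 0 < R0 /\ exists C : R, forall t, 0 < t <= R0 ->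
    G t \in unitmx /\ mxinfnorm (invmx (G t)) <= C.
Proof.
move=> H UL.
have dL : \det L != 0 by rewrite -unitfE -unitmxE.
have hdet : \det (G x) @[x --> 0^'] --> \det L by apply: cvg_det.
have hadj : forall i j, \adj (G x) i j @[x --> 0^'] --> \adj L i j by apply: cvg_adj.
have nd : \forall x \near 0^', \det (G x) != 0 by apply: cvgr_neq0 hdet dL.
set S := \sum_i \sum_j `|invmx L i j|.
have hs1 : (\sum_i \sum_j `|((\det (G x))^-1 * \adj (G x) i j)|) @[x --> 0^'] --> S.
  rewrite /S; apply: cvg_sumR => i _; apply: cvg_sumR => j _; apply: cvg_norm.
  rewrite /invmx UL mxE.
  apply: cvgM; last exact: hadj.
  exact: cvgV.
have hs : (\sum_i \sum_j `|invmx (G x) i j|) @[x --> 0^'] --> S.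
  apply: cvg_trans hs1; apply: near_eq_cvg; near=> x.
  have Ux : G x \in unitmx by rewrite unitmxE unitfE; near: x.
  apply: eq_bigr => i _; apply: eq_bigr => j _.
  rewrite /invmx Ux.
  by rewrite !mxE.
have hlt : \forall x \near 0^', \sum_i \sum_j `|invmx (G x) i j| < S + 1 by apply: cvgr_lt hs _ _; rewrite ltrDl.
have : \forall x \near 0^', \det (G x) != 0 /\ \sum_i \sum_j `|invmx (G x) i j| < S + 1.
  by near=> x; split; near: x.
rewrite /= /within => /nbhs_ballP [e /= e0 He].
exists (e / 2); split; first by rewrite divr_gt0.
exists (S + 1) => t /andP [t0 te].
have bt : ball 0 e t.
  rewrite -ball_normE /=.
  rewrite sub0r normrN gtr0_norm //.
  apply: (le_lt_trans te); rewrite ltr_pdivrMr // ltr_pMr // ltr1n //.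
have [d0 sl] := He t bt (lt0r_neq0 t0).
split; first by rewrite unitmxE unitfE.
exact: (le_trans (infnorm_le _ (invmx (G t))) (ltW sl)).
Unshelve. all: by end_near. Qed.
End A.


Section C.
Variable R : realType.
Context {T : Type} (F : set_system T) {FF : Filter F}.

Lemma phi_cvg j (x y : T -> R) x0 y0 : x t @[t --> F] --> x0 -> y t @[t --> F] --> y0 ->
  phi R j (x t) (y t) @[t --> F] --> phi R j x0 y0.
Proof.
move=> hx hy.
case: j => [|[|[|[|[|j]]]]] /=; rewrite ?expr2; try exact: cvg_cst; try done;
  under eq_cvg do rewrite ?expr2; exact: cvgM.
Qed.

Lemma dphi_cvg a j (x y : T -> R) x0 y0 : x t @[t --> F] --> x0 -> y t @[t --> F] --> y0 ->
  dphi R a j (x t) (y t) @[t --> F] --> dphi R a j x0 y0.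
Proof.
move=> hx hy.
case: j => [|[|[|[|[|j]]]]] /=; case: (a == 0)%N; try exact: cvg_cst; try done;
  exact: cvgMl_tmp.
Qed.

Lemma comp_cvg (a : nat) (p : T -> R * R) P : (p t).1 @[t --> F] --> P.1 -> (p t).2 @[t --> F] --> P.2 ->
  Defs.comp R a (p t) @[t --> F] --> Defs.comp R a P.
Proof. by rewrite /Defs.comp; case: (a == 0)%N. Qed.

Lemma cvg_ext2 (f g : T -> R) (l l' : R) : (forall t, f t = g t) -> l = l' ->
  g t @[t --> F] --> l' -> f t @[t --> F] --> l.
Proof. by move=> /funext -> ->. Qed.

Lemma cvgD' (f g : T -> R) (a b : R) : f t @[t --> F] --> a -> g t @[t --> F] --> b ->
  f t + g t @[t --> F] --> a + b.
Proof. exact: cvgD. Qed.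
Lemma cvgM' (f g : T -> R) (a b : R) : f t @[t --> F] --> a -> g t @[t --> F] --> b ->
  f t * g t @[t --> F] --> a * b.
Proof. exact: cvgM. Qed.
Lemma cvgB' (f g : T -> R) (a b : R) : f t @[t --> F] --> a -> g t @[t --> F] --> b ->
  f t - g t @[t --> F] --> a - b.
Proof. exact: cvgB. Qed.
Lemma cvgN' (f : T -> R) (a : R) : f t @[t --> F] --> a -> - f t @[t --> F] --> - a.
Proof. exact: cvgN. Qed.
Lemma cvgC' (a : R) : a @[t --> F] --> a.
Proof. exact: cvg_cst. Qed.

Ltac cvhyp := lazymatch goal with
 | |- cvg_to (nbhs (fmap (fun _ => GRing.mul (?pr (?q _ _)) _) _)) _ =>
   match goal with H : forall k, cvg_to (nbhs (fmap (fun _ => GRing.mul (pr (q _ k)) _) _)) _ |- _ => apply: H end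
 | |- cvg_to (nbhs (fmap (fun _ => GRing.mul (?pr (?q _)) _) _)) _ =>
   match goal with H : cvg_to (nbhs (fmap (fun _ => GRing.mul (pr (q _)) _) _)) _ |- _ => apply: H end
 | |- cvg_to (nbhs (fmap (fun _ => ?pr (?q _ _)) _)) _ =>
   match goal with H : forall k, cvg_to (nbhs (fmap (fun _ => pr (q _ k)) _)) _ |- _ => apply: H end
 end.
Ltac cvstep := lazymatch goal with
| |- cvg_to (nbhs (fmap (fun _ => GRing.add _ _) _)) _ => apply: cvgD'
| |- cvg_to (nbhs (fmap (fun _ => GRing.opp _) _)) _ => apply: cvgN'
| |- cvg_to (nbhs (fmap (fun _ => phi _ _ _ _) _)) _ => apply: phi_cvg
| |- cvg_to (nbhs (fmap (fun _ => dphi _ _ _ _ _) _)) _ => apply: dphi_cvg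
| |- cvg_to (nbhs (fmap (fun _ => Defs.comp _ _ _) _)) _ => apply: comp_cvg
| |- cvg_to (nbhs (fmap (fun _ => GRing.mul (fst _) (GRing.inv _)) _)) _ => 
    cvhyp
| |- cvg_to (nbhs (fmap (fun _ => GRing.mul (snd _) (GRing.inv _)) _)) _ => 
    cvhyp
| |- cvg_to (nbhs (fmap (fun _ => fst _) _)) _ => cvhyp
| |- cvg_to (nbhs (fmap (fun _ => snd _) _)) _ => cvhyp
| |- cvg_to (nbhs (fmap (fun _ => GRing.mul _ _) _)) _ => apply: cvgM'
| |- _ => apply: cvgC'
end.

Lemma collocM_cvg (lam : R) (rad : T -> R) (q1 : T -> 'I_3 -> R * R) (q2 nv : T -> 'I_2 -> R * R)
  (q3 : T -> R * R) (q4 : T -> 'I_3 -> R * R) (Q1 : 'I_3 -> R * R) (Q2 NV : 'I_2 -> R * R)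
  (Q3 : R * R) (Q4 : 'I_3 -> R * R) :
  (forall k, (q1 t k).1 / rad t @[t --> F] --> (Q1 k).1) ->
  (forall k, (q1 t k).2 / rad t @[t --> F] --> (Q1 k).2) ->
  (forall k, (q2 t k).1 / rad t @[t --> F] --> (Q2 k).1) ->
  (forall k, (q2 t k).2 / rad t @[t --> F] --> (Q2 k).2) ->
  (forall k, (nv t k).1 @[t --> F] --> (NV k).1) ->
  (forall k, (nv t k).2 @[t --> F] --> (NV k).2) ->
  ((q3 t).1 / rad t @[t --> F] --> Q3.1) ->
  ((q3 t).2 / rad t @[t --> F] --> Q3.2) ->
  (forall k, (q4 t k).1 / rad t @[t --> F] --> (Q4 k).1) ->
  (forall k, (q4 t k).2 / rad t @[t --> F] --> (Q4 k).2) ->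
  forall r u, collocM lam (rad t) (q1 t) (q2 t) (nv t) (q3 t) (q4 t) r u @[t --> F]
     --> collocM lam 1 Q1 Q2 NV Q3 Q4 r u.
Proof.
move=> h11 h12 h21 h22 hn1 hn2 h31 h32 h41 h42 r u.
apply: cvg_ext2; [move=> t; exact: mxE | exact: mxE | ].
cbv beta zeta; cbn [fst snd]; rewrite ?divr1.
case: (u < 12)%N; (case: (r < 6)%N; [|case: (r < 10)%N; [|case: (r < 12)%N]]); cbv iota.
all: repeat cvstep.
Qed.
End C.

Section D.
Variable R : realType.

Definition Lf (lam Rad : R) (q1 : 'I_3 -> R * R) (q2 nv : 'I_2 -> R * R)
    (q3 : R * R) (q4 : 'I_3 -> R * R) (r u : nat) : R :=
   (let sc (p : R * R) := (p.1 / Rad, p.2 / Rad) in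
    if (u < 12)%N then
      let j := (u %/ 2)%N in let b := (u %% 2)%N in
      if (r < 6)%N then
        let p := sc (q1 (inord (r %/ 2))) in let a := (r %% 2)%N in
        (a == b)%:R * phi R j p.1 p.2
      else if (r < 10)%N then
        let k : 'I_2 := inord ((r - 6) %/ 2) in
        let p := sc (q2 k) in let n := nv k in let a := (r %% 2)%N in
        (a == b)%:R * (dphi R 0 j p.1 p.2 * n.1 + dphi R 1 j p.1 p.2 * n.2)
        + dphi R a j p.1 p.2 * Defs.comp R b n
      else if (r < 12)%N then
        let p := sc q3 in let a := (r - 10)%N in
        (a == b)%:R * (lapphi R j - lam * phi R j p.1 p.2)
      else
        let p := sc (q4 (inord (r - 12))) in dphi R b j p.1 p.2
    else
      let j := (u - 12)%N in
      if (r < 6)%N then 0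
      else if (r < 10)%N then
        let k : 'I_2 := inord ((r - 6) %/ 2) in
        let p := sc (q2 k) in let n := nv k in let a := (r %% 2)%N in
        - (phi R j p.1 p.2 * Defs.comp R a n)
      else if (r < 12)%N then
        let p := sc q3 in let a := (r - 10)%N in
        - dphi R a j p.1 p.2
      else 0).


Lemma LfE lam Rad q1 q2 nv q3 q4 (r u : 'I_15) :
  collocM lam Rad q1 q2 nv q3 q4 r u = Lf lam Rad q1 q2 nv q3 q4 r u.
Proof. by rewrite mxE. Qed.

Lemma eq0_ring {P Q : R} : P = Q -> Q = 0 -> P = 0.
Proof. by move=> -> . Qed.

Lemma eq0_ringN {P Q : R} : P = - Q -> Q = 0 -> P = 0.
Proof. by move=> -> ->; rewrite oppr0. Qed.

Lemma lin2 (a b x y : R) : a != b -> x + y * a = 0 -> x + y * b = 0 -> x = 0 /\ y = 0.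
Proof.
move=> nab ha hb.
have e : (a - b) * y = (x + y * a) - (x + y * b) by ring.
rewrite ha hb subrr in e.
move/eqP: e; rewrite mulf_eq0 subr_eq0 (negbTE nab) /= => /eqP y0.
by split => //; move: ha; rewrite y0 mul0r addr0.
Qed.

Lemma vand3 (a b c x y z : R) : a != b -> a != c -> b != c ->
  x + (y * a + z * a ^+ 2) = 0 -> x + (y * b + z * b ^+ 2) = 0 -> x + (y * c + z * c ^+ 2) = 0 ->
  [/\ x = 0, y = 0 & z = 0].
Proof.
move=> nab nac nbc ha hb hc.
have h1 : (y + z * (a + b)) * (a - b) = (x + (y * a + z * a ^+ 2)) - (x + (y * b + z * b ^+ 2)) by ring.
have h2 : (y + z * (a + c)) * (a - c) = (x + (y * a + z * a ^+ 2)) - (x + (y * c + z * c ^+ 2)) by ring.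
rewrite ha hb subrr in h1; rewrite ha hc subrr in h2.
move/eqP: h1; rewrite mulf_eq0 subr_eq0 (negbTE nab) orbF => /eqP h1.
move/eqP: h2; rewrite mulf_eq0 subr_eq0 (negbTE nac) orbF => /eqP h2.
have h3 : z * (b - c) = (y + z * (a + b)) - (y + z * (a + c)) by ring.
rewrite h1 h2 subrr in h3.
move/eqP: h3; rewrite mulf_eq0 subr_eq0 (negbTE nbc) orbF => /eqP z0.
have y0 : y = 0 by move: h1; rewrite z0 mul0r addr0.
by split => //; move: ha; rewrite y0 z0 !mul0r !addr0.
Qed.

Lemma plane3 (x0 y0 x1 y1 x2 y2 A B C : R) :
  (x1 - x0) * (y2 - y0) - (y1 - y0) * (x2 - x0) != 0 ->
  A + B * x0 + C * y0 = 0 -> A + B * x1 + C * y1 = 0 -> A + B * x2 + C * y2 = 0 ->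
  [/\ A = 0, B = 0 & C = 0].
Proof.
move=> d h0 h1 h2.
have eB : B * ((x1 - x0) * (y2 - y0) - (y1 - y0) * (x2 - x0)) = (y2 - y0) * ((A + B * x1 + C * y1) - (A + B * x0 + C * y0))
     - (y1 - y0) * ((A + B * x2 + C * y2) - (A + B * x0 + C * y0)) by ring.
have eC : C * ((x1 - x0) * (y2 - y0) - (y1 - y0) * (x2 - x0)) = (x1 - x0) * ((A + B * x2 + C * y2) - (A + B * x0 + C * y0))
     - (x2 - x0) * ((A + B * x1 + C * y1) - (A + B * x0 + C * y0)) by ring.
rewrite h0 h1 h2 subrr !mulr0 subrr in eB.
rewrite h0 h1 h2 subrr !mulr0 subrr in eC.
move/eqP: eB; rewrite mulf_eq0 (negbTE d) orbF => /eqP B0.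
move/eqP: eC; rewrite mulf_eq0 (negbTE d) orbF => /eqP C0.
by split => //; move: h0; rewrite B0 C0 !mul0r !addr0.
Qed.

Lemma L_unit (lam : R) (e1 : 'I_3 -> R) (e2 : 'I_2 -> R) (e3 : R) (xi : 'I_3 -> R * R) (s : R) :
  injective e1 -> e2 ord0 != e2 (inord 1) ->
  ((xi (inord 1)).1 - (xi ord0).1) * ((xi (inord 2)).2 - (xi ord0).2)
    - ((xi (inord 1)).2 - (xi ord0).2) * ((xi (inord 2)).1 - (xi ord0).1) != 0 ->
  s != 0 ->
  collocM lam 1 (fun k => (e1 k, 0)) (fun k => (e2 k, 0)) (fun k => (0, s)) (e3, 0) xi \in unitmx.
Proof.
move=> ie1 ne2 dxi s0.
set L := collocM _ _ _ _ _ _ _.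
rewrite -unitmx_tr -row_free_unit -kermx_eq0 -submx0.
apply/rV_subP => v /sub_kermxP hv; rewrite submx0.
have eq0 r : \sum_(k <- iota 0 15) v 0 (inord k) * L r (inord k) = 0.
  have := congr1 (fun M : 'rV_15 => M 0 r) hv; rewrite mxE [in X in _ = X -> _]mxE => h; rewrite -[RHS]h.
  rewrite (_ : iota 0 15 = index_iota 0 15) // big_mkord; apply: eq_bigr => i _.
  by rewrite inord_val [L^T _ _]mxE.
have eq r : (r < 15)%N -> \sum_(k <- iota 0 15) v 0 (inord k) *
     Lf lam 1 (fun k => (e1 k, 0)) (fun k => (e2 k, 0)) (fun k => (0, s)) (e3, 0) xi r k = 0.
  move=> hr; rewrite -[RHS](eq0 (inord r)); apply: eq_big_seq => k; rewrite mem_iota => /andP [_ hk].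
  by rewrite /L LfE !inordK.
clear eq0 hv.
have h0 := eq 0%N isT; rewrite [iota _ _]/= !big_cons big_nil /Lf /= in h0.
have h1 := eq 1%N isT; rewrite [iota _ _]/= !big_cons big_nil /Lf /= in h1.
have h2 := eq 2%N isT; rewrite [iota _ _]/= !big_cons big_nil /Lf /= in h2.
have h3 := eq 3%N isT; rewrite [iota _ _]/= !big_cons big_nil /Lf /= in h3.
have h4 := eq 4%N isT; rewrite [iota _ _]/= !big_cons big_nil /Lf /= in h4.
have h5 := eq 5%N isT; rewrite [iota _ _]/= !big_cons big_nil /Lf /= in h5.
have h6 := eq 6%N isT; rewrite [iota _ _]/= !big_cons big_nil /Lf /= in h6.
have h7 := eq 7%N isT; rewrite [iota _ _]/= !big_cons big_nil /Lf /= in h7.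
have h8 := eq 8%N isT; rewrite [iota _ _]/= !big_cons big_nil /Lf /= in h8.
have h9 := eq 9%N isT; rewrite [iota _ _]/= !big_cons big_nil /Lf /= in h9.
have h10 := eq 10%N isT; rewrite [iota _ _]/= !big_cons big_nil /Lf /= in h10.
have h11 := eq 11%N isT; rewrite [iota _ _]/= !big_cons big_nil /Lf /= in h11.
have h12 := eq 12%N isT; rewrite [iota _ _]/= !big_cons big_nil /Lf /= in h12.
have h13 := eq 13%N isT; rewrite [iota _ _]/= !big_cons big_nil /Lf /= in h13.
have h14 := eq 14%N isT; rewrite [iota _ _]/= !big_cons big_nil /Lf /= in h14.
clear eq.
rewrite -?[(0 %/ 2)%N]/0%N -?[(1 %/ 2)%N]/0%N -?[(2 %/ 2)%N]/1%N -?[(3 %/ 2)%N]/1%N -?[(4 %/ 2)%N]/2%N -?[(5 %/ 2)%N]/2%N in h0 h1 h2 h3 h4 h5.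
rewrite -?[((6 - 6) %/ 2)%N]/0%N -?[((7 - 6) %/ 2)%N]/0%N -?[((8 - 6) %/ 2)%N]/1%N -?[((9 - 6) %/ 2)%N]/1%N in h6 h7 h8 h9.
rewrite -?[(12 - 12)%N]/0%N -?[(13 - 12)%N]/1%N -?[(14 - 12)%N]/2%N in h12 h13 h14.
rewrite ?divr1 ?div0r ?mul0r ?mulr0 ?mul1r ?mulr1 ?addr0 ?add0r ?expr0n ?oppr0 ?subr0 ?sub0r /= ?mul0r ?mulr0 ?mul1r ?mulr1 ?addr0 ?add0r ?subr0 ?sub0r in h0 h1 h2 h3 h4 h5 h6 h7 h8 h9 h10 h11 h12 h13 h14.
rewrite -?[(3 %% 2)%N]/1%N -?[(7 %% 2)%N]/1%N -?[(9 %% 2)%N]/1%N -?[(11 %% 2)%N]/1%N /Defs.comp /= in h6 h7 h8 h9.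
have o0 : (inord 0 : 'I_2) = ord0 by apply: val_inj; rewrite /= inordK.
have o0' : (inord 0 : 'I_3) = ord0 by apply: val_inj; rewrite /= inordK.
rewrite o0 in h6 h7 h8 h9; rewrite o0' in h12.
have n01 : e1 (inord 0) != e1 (inord 1).
  by apply/eqP => /ie1 /(congr1 (@nat_of_ord 3)); rewrite !inordK.
have n02 : e1 (inord 0) != e1 (inord 2).
  by apply/eqP => /ie1 /(congr1 (@nat_of_ord 3)); rewrite !inordK.
have n12 : e1 (inord 1) != e1 (inord 2).
  by apply/eqP => /ie1 /(congr1 (@nat_of_ord 3)); rewrite !inordK.
have [w0 w2 w6] := vand3 _ _ _ _ _ _ n01 n02 n12 h0 h2 h4.
have [w1 w3 w7] := vand3 _ _ _ _ _ _ n01 n02 n12 h1 h3 h5.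
have [w5 w11 w9'] : [/\ v 0 (inord 5) = 0, v 0 (inord 11) = 0 & 2 * v 0 (inord 9) + v 0 (inord 10) = 0].
  apply: (plane3 _ _ _ _ _ _ _ _ _ dxi).
  - by apply: (eq0_ring _ h12); rewrite w2 w6; ring.
  - by apply: (eq0_ring _ h13); rewrite w2 w6; ring.
  - by apply: (eq0_ring _ h14); rewrite w2 w6; ring.
have [w4s w10s] : v 0 (inord 4) * s = 0 /\ v 0 (inord 10) * s = 0.
  apply: (lin2 _ _ _ _ ne2).
  - by apply: (eq0_ring _ h6); rewrite w3 w7; ring.
  - by apply: (eq0_ring _ h8); rewrite w3 w7; ring.
have [w12s w13s] : v 0 (inord 12) * s = 0 /\ v 0 (inord 13) * s = 0.
  apply: (lin2 _ _ _ _ ne2).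
  - by apply: (eq0_ringN _ h7); rewrite w5 w11; ring.
  - by apply: (eq0_ringN _ h9); rewrite w5 w11; ring.
move/eqP: w4s; rewrite mulf_eq0 (negbTE s0) orbF => /eqP w4.
move/eqP: w10s; rewrite mulf_eq0 (negbTE s0) orbF => /eqP w10.
move/eqP: w12s; rewrite mulf_eq0 (negbTE s0) orbF => /eqP w12.
move/eqP: w13s; rewrite mulf_eq0 (negbTE s0) orbF => /eqP w13.
have w9 : v 0 (inord 9) = 0.
  move: w9'; rewrite w10 addr0 => /eqP; rewrite mulf_eq0 pnatr_eq0 /= => /eqP //.
have w8 : v 0 (inord 8) = 0.
  have : v 0 (inord 8) * 2 = 0 by apply: (eq0_ring _ h10); rewrite w0 w2 w6 w13; ring.
  by move/eqP; rewrite mulf_eq0 pnatr_eq0 orbF => /eqP.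
have w14 : v 0 (inord 14) = 0 by apply: (eq0_ringN _ h11); rewrite w1 w3 w7 w9; ring.
apply/eqP/rowP => i; rewrite mxE -[i]inord_val; case: i => k hk /=.
by do 15! (case: k hk => [|k] hk; first by assumption).
Qed.
End D.

Section E.
Variable R : realType.

Lemma scale_dnbhs (e : R) : e != 0 -> (fun t => e * t) @ (0 : R)^' --> (0 : R)^'.
Proof.
move=> e0 P /nbhs_ballP [d /= d0 Hd]; apply/nbhs_ballP.
exists (d / `|e|) => /=; first by rewrite divr_gt0 // normr_gt0.
move=> t bt t0; apply: Hd; last by rewrite mulf_neq0.
move: bt; rewrite -!ball_normE /= !sub0r !normrN normrM => bt.
by rewrite -ltr_pdivlMl ?normr_gt0 // mulrC.
Qed.

Lemma near_eq_cvgR {T : Type} {F : set_system T} {FF : Filter F} (f g : T -> R) (l : R) :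
  (\forall t \near F, g t = f t) -> g t @[t --> F] --> l -> f t @[t --> F] --> l.
Proof.
move=> H hg.
have h1 : f t @[t --> F] `=>` g t @[t --> F] by apply: near_eq_cvg.
exact: cvg_trans h1 hg.
Qed.

Lemma id_dnbhs : (fun t : R => t) @ (0 : R)^' --> (0 : R).
Proof. exact: nbhs_dnbhs. Qed.

Lemma deriv_scaled (f : R -> R) (c e : R) : derivable f 0 1 -> f 0 = 0 -> derive1 f 0 = c ->
  f (e * t) / t @[t --> (0 : R)^'] --> e * c.
Proof.
move=> df f0 dc.
have [->|e0] := eqVneq e 0.
  rewrite mul0r; under eq_cvg do rewrite mul0r f0 mul0r.
  exact: cvg_cst.
have hg : (fun h => h^-1 *: ((f \o shift 0) (h *: 1) - f 0)) @ (0 : R)^' --> 'D_1 f 0 := df.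
rewrite -derive1E dc in hg.
have hc := cvg_comp _ _ (scale_dnbhs e e0) hg.
have hc2 : e * ((e * x)^-1 *: ((f \o shift 0) ((e * x) *: 1) - f 0)) @[x --> (0 : R)^'] --> e * c.
  by apply: cvgMl_tmp; exact: hc.
apply: (near_eq_cvgR _ _ _ _ hc2); near=> t.
have t0 : t != 0 by near: t; exact: nbhs_dnbhs_neq.
rewrite /= f0 subr0 -[(e * t)%:A]/((e * t) * 1) mulr1 addr0 -[(e * t)^-1 *: _]/((e * t)^-1 * _).
rewrite invfM.
by rewrite mulrA mulrA mulfV // mul1r mulrC.
Unshelve. all: by end_near. Qed.

Lemma cont_scaled (f : R -> R) (e : R) : f @ (0 : R) --> f 0 ->
  f (e * t) @[t --> (0 : R)^'] --> f 0.
Proof.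
move=> hf.
have h : (e * t) @[t --> (0 : R)^'] --> e * 0 by apply: cvgMl_tmp; exact: id_dnbhs.
rewrite mulr0 in h.
exact: cvg_comp h hf.
Qed.

Lemma lin_scaled (x : R) : (t * x) / t @[t --> (0 : R)^'] --> x.
Proof.
apply: (near_eq_cvgR _ _ _ _ (cvg_cst x)); near=> t.
have t0 : t != 0 by near: t; exact: nbhs_dnbhs_neq.
by rewrite [t * x]mulrC mulfK.
Unshelve. all: by end_near. Qed.
End E.

Theorem mainTheorem4 (R : realType) (a lam : R) (X1 X2 n1 n2 : R -> R)
    (eta1 : 'I_3 -> R) (eta2 : 'I_2 -> R) (eta3 : R) (xi : 'I_3 -> R * R) :
  (* Gamma: C^2 curve, arc-length parametrized by s in ]-a, a[ *)
  0 < a ->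
  (forall s : R, -a < s < a ->
     [/\ derivable X1 s 1, derivable X2 s 1,
         derivable (derive1 X1) s 1 & derivable (derive1 X2) s 1] /\
     {for s, continuous (derive1 (derive1 X1))} /\ {for s, continuous (derive1 (derive1 X2))}) ->
  (forall s : R, -a < s < a -> ((derive1 X1) s) ^+ 2 + ((derive1 X2) s) ^+ 2 = 1) ->
  X1 0 = 0 -> X2 0 = 0 -> (derive1 X1) 0 = 1 -> (derive1 X2) 0 = 0 ->
  (* unit normal field n(X(s)) = (n1 s, n2 s) *)
  (forall s : R, -a < s < a ->
     (n1 s) ^+ 2 + (n2 s) ^+ 2 = 1 /\ n1 s * (derive1 X1) s + n2 s * (derive1 X2) s = 0) ->
  {in `]-a, a[, continuous n1} -> {in `]-a, a[, continuous n2} ->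
  0 <= lam ->
  (* collocation constants *)
  injective eta1 ->
  eta2 ord0 != eta2 (inord 1) ->
  ((xi (inord 1)).1 - (xi ord0).1) * ((xi (inord 2)).2 - (xi ord0).2)
    - ((xi (inord 1)).2 - (xi ord0).2) * ((xi (inord 2)).1 - (xi ord0).1) != 0 ->
  (* all points lie in the disc O of radius R *)
  (forall k, `|eta1 k| <= 1) -> (forall k, `|eta2 k| <= 1) -> `|eta3| <= 1 ->
  (forall k, (xi k).1 ^+ 2 + (xi k).2 ^+ 2 <= 1) ->
  exists R0 : R, 0 < R0 /\ exists C : R,
    forall Rad : R, 0 < Rad <= R0 ->
      let X s := (X1 s, X2 s) in
      let M := collocM lam Rad
                 (fun k => X (eta1 k * Rad))
                 (fun k => X (eta2 k * Rad))
                 (fun k => (n1 (eta2 k * Rad), n2 (eta2 k * Rad)))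
                 (X (eta3 * Rad))
                 (fun k => (Rad * (xi k).1, Rad * (xi k).2)) in
      M \in unitmx /\ mxinfnorm (invmx M) <= C.
Proof.
Proof.
move=> a0 hreg hunit X10 X20 dX10 dX20 hn hc1 hc2 lam0 ie1 ne2 dxi b1 b2 b3 b4.
have h00 : -a < 0 < a by rewrite oppr_lt0 a0.
have [hn0 hn0'] := hn 0 h00.
rewrite dX10 dX20 mulr1 mulr0 addr0 in hn0'.
rewrite hn0' expr0n /= add0r in hn0.
have s0 : n2 0 != 0.
  by apply/eqP => h; move: hn0; rewrite h expr0n /= => /eqP; rewrite eq_sym oner_eq0.
have [[d1 d2 _ _] _] := hreg 0 h00.
have i0 : (0 : R) \in `]-a, a[ by rewrite in_itv /= oppr_lt0 a0.
have cn1 : n1 @ (0 : R) --> n1 0 := hc1 0 i0.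
have cn2 : n2 @ (0 : R) --> n2 0 := hc2 0 i0.
pose G t := collocM lam t (fun k => (X1 (eta1 k * t), X2 (eta1 k * t)))
   (fun k => (X1 (eta2 k * t), X2 (eta2 k * t)))
   (fun k => (n1 (eta2 k * t), n2 (eta2 k * t)))
   (X1 (eta3 * t), X2 (eta3 * t)) (fun k => (t * (xi k).1, t * (xi k).2)).
pose L := collocM lam 1 (fun k => (eta1 k, 0)) (fun k => (eta2 k, 0)) (fun k => (0, n2 0)) (eta3, 0) xi.
have HL : L \in unitmx by apply: L_unit.
have Hc : forall i j, G x i j @[x --> (0 : R)^'] --> L i j.
  move=> i j; apply: (@collocM_cvg R _ _ _ lam (fun t => t)).
  - move=> k /=; have := deriv_scaled _ _ _ (eta1 k) d1 X10 dX10; rewrite mulr1; exact.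
  - move=> k /=; have := deriv_scaled _ _ _ (eta1 k) d2 X20 dX20; rewrite mulr0; exact.
  - move=> k /=; have := deriv_scaled _ _ _ (eta2 k) d1 X10 dX10; rewrite mulr1; exact.
  - move=> k /=; have := deriv_scaled _ _ _ (eta2 k) d2 X20 dX20; rewrite mulr0; exact.
  - move=> k /=; have := cont_scaled _ _ (eta2 k) cn1; rewrite hn0'; exact.
  - move=> k /=; exact: cont_scaled _ _ (eta2 k) cn2.
  - rewrite /=; have := deriv_scaled _ _ _ eta3 d1 X10 dX10; rewrite mulr1; exact.
  - rewrite /=; have := deriv_scaled _ _ _ eta3 d2 X20 dX20; rewrite mulr0; exact.
  - move=> k /=; exact: lin_scaled.
  - move=> k /=; exact: lin_scaled.
have [R0 [R0p [C HC]]] := key _ _ _ _ Hc HL.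
exists R0; split => //; exists C => Rad hR.
exact: HC.
Qed.
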